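(* Let $k\ge2$ and $r\ge0$, and set $\alpha=1-2^{-k}$ and $$\beta=\sum_{j=1}^k\frac{j}{2^j}+\frac{k+1}{2^k}\;\Big(=2-\frac1{2^k}\Big).$$ Let $X$ be a strongly-stable sequence with respect to the $(k,r)$-tree $T_r$ that is a whole multiple of its atomic sequence. Then $$\hat c(GF,X,T_r)=2^k\beta(1-\alpha^r)+\alpha^r.$$ In asymptotic terms, $\hat c(GF,X,T_r)=\Theta(2^k(1-\alpha^r))$.
   Context: Binary search tree model. An algorithm $A$ serves a query sequence $X=[x_1,\dots,x_m]$ from an initial BST $T_0$. Before serving $x_t$ it holds a BST $T_{t-1}$; it searches $x_t$ from the root and may then restructure the tree by rotations into $T_t$. Let $P_t$ be the set of nodes on the root-to-$x_t$ path of $T_{t-1}$, and let $U_t$ be the node set of the minimal subtree containing all edges rotated in transforming $T_{t-1}$ into $T_t$. The cost at time $t$ is $|P_t\cup U_t|$, and $\hat c(A,X,T_0)$ is the total cost divided by $m$. Greedy Future ($GF$). After finding $x_t$ in $T_{t-1}$, let $v_1<\dots<v_k$ be the keys on the root-to-$x_t$ path, set $v_0=-\infty$ and $v_{k+1}=+\infty$, and let $R_0,\dots,R_k$ be the subtrees hanging off this path. For each $i$, $\tau(v_i)$ is the smallest $s>t$ with $x_s\in(v_{i-1},v_{i+1})$, or $+\infty$ if there is none. $GF$ rearranges $v_1,\dots,v_k$ as a treap: a BST in key order and a heap in $\tau$, with the smallest $\tau$ at the top. Ties in $\tau$ are broken in favor of the node of smaller depth in $T_{t-1}$. It then reattaches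 $R_0,\dots,R_k$ unchanged at their unique positions, giving $T_t$. $(k,r)$-trees. Let $k\ge2$ and $r\ge0$ be integers. $T_0$ is a single node. For $r\ge1$, $T_r$ has $k$ trunk nodes $w_1,\dots,w_k$: $w_1$ is the root, $w_2$ is the right child of $w_1$, and $w_{j+1}$ is the left child of $w_j$ for $2\le j\le k-1$. The left child of $w_k$ is a single leaf (the actual leaf). Each of the remaining $k$ child positions of trunk nodes (the left child of $w_1$ and the right child of $w_j$ for $2\le j\le k$) is the root of a copy of $T_{r-1}$. Keys are $1,\dots,|T_r|$ in symmetric order. Stable sequences. Let $T$ be a full binary search tree, and let $X$ be a query sequence consisting only of keys stored at leaves of $T$. For an inner node $v$, let $X_v$ be the subsequence of $X$ consisting of the queries to keys in the subtree of $v$. The node $v$ is strongly-stable if consecutive queries of $X_v$ alternate between the left and right subtrees of $v$. $X$ is strongly-stable if every inner node of $T$ is strongly-stable. The atomic sequence is the shortest such sequence all of whose repetitions are again strongly-stable for $T$. $X$ is a whole multiple of it if it is a concatenation of copies of it. *)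

(* Defs.v *)
From mathcomp Require Import all_boot all_order all_algebra.
Set Implicit Arguments. Unset Strict Implicit. Unset Printing Implicit Defensive.
Import Order.TTheory GRing.Theory Num.Theory.

Inductive tree : Type :=
| Leaf : tree
| Node : tree -> nat -> tree -> tree.

Definition is_empty (T : tree) : bool := if T is Leaf then true else false.

Fixpoint keys (T : tree) : seq nat :=
  match T with
  | Leaf => [::]
  | Node l v r => keys l ++ v :: keys r
  end.

Fixpoint leaf_keys (T : tree) : seq nat :=
  match T with
  | Leaf => [::]
  | Node l v r =>
      if is_empty l && is_empty r then [:: v] else leaf_keys l ++ leaf_keys r
  end.

Fixpoint path_len (T : tree) (x : nat) : nat :=
  match T with
  | Leaf => 0
  | Node l v r =>
      (if x < v then path_len l x else if v < x then path_len r x else 0).+1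
  end.

(* In-order sequence of the pieces obtained by cutting the search path to x:
   hanging subtrees R_0,...,R_k (inl) interleaved with the path nodes
   v_1 < ... < v_k (inr (key, depth in the current tree)). *)
Fixpoint pieces (d : nat) (T : tree) (x : nat) : seq (tree + (nat * nat)) :=
  match T with
  | Leaf => [:: inl Leaf]
  | Node l v r =>
      if x < v then pieces d.+1 l x ++ [:: inr (v, d); inl r]
      else if v < x then [:: inl l; inr (v, d)] ++ pieces d.+1 r x
      else [:: inl l; inr (v, d); inl r]
  end.

Definition get_tree (p : tree + (nat * nat)) : option tree :=
  if p is inl t then Some t else None.
Definition get_node (p : tree + (nat * nat)) : option (nat * nat) :=
  if p is inr n then Some n else None.

(* open interval (lo, hi), None = -oo resp. +oo *)
Definition in_open (lo hi : option nat) (y : nat) : bool :=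
  (if lo is Some a then a < y else true) && (if hi is Some b then y < b else true).

(* A path node annotated as (key, depth, tau); tau is the 0-based index in
   the future query sequence x_{t+1}, x_{t+2}, ... of the first query in the
   interval (v_{i-1}, v_{i+1}); it equals the length of the future sequence
   (larger than every real index) when there is none, playing the role of +oo. *)
Definition nkey (n : nat * nat * nat) : nat := n.1.1.
Definition ndepth (n : nat * nat * nat) : nat := n.1.2.
Definition ntau (n : nat * nat * nat) : nat := n.2.

(* a has strictly higher treap priority than b: smaller tau, ties broken in
   favour of smaller depth in T_{t-1} *)
Definition prec (a b : nat * nat * nat) : bool :=
  (ntau a < ntau b) || ((ntau a == ntau b) && (ndepth a < ndepth b)).

Fixpoint amin (s : seq (nat * nat * nat)) : nat :=
  match s with
  | [::] => 0
  | x :: s' =>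
      if s' is [::] then 0
      else let j := amin s' in if prec (nth x s' j) x then j.+1 else 0
  end.

(* treap on the (key-sorted) nodes ns with the subtrees ss (size ns + 1 of
   them) reattached at their positions *)
Fixpoint build (fuel : nat) (ns : seq (nat * nat * nat)) (ss : seq tree) : tree :=
  match fuel with
  | 0 => head Leaf ss
  | f.+1 =>
      match ns with
      | [::] => head Leaf ss
      | n0 :: _ =>
          let i := amin ns in
          Node (build f (take i ns) (take i.+1 ss))
               (nkey (nth n0 ns i))
               (build f (drop i.+1 ns) (drop i.+1 ss))
      end
  end.

Definition gf_step (future : seq nat) (T : tree) (x : nat) : tree :=
  let ps := pieces 0 T x in
  let subs := pmap get_tree ps in
  let nds := pmap get_node ps in
  let vs := map fst nds in
  let los := None :: map Some vs in
  let his := map Some (behead vs) ++ [:: None] in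
  let ns := [seq (nd, find (in_open lohi.1 lohi.2) future)
            | '(nd, lohi) <- zip nds (zip los his)] in
  build (size ns) ns subs.

(* total cost sum_t |P_t ∪ U_t| = sum_t |P_t| of GF serving X from T *)
Fixpoint gf_total (T : tree) (X : seq nat) : nat :=
  match X with
  | [::] => 0
  | x :: X' => path_len T x + gf_total (gf_step X' T x) X'
  end.

Definition gf_avg_cost (T : tree) (X : seq nat) : rat :=
  ((gf_total T X)%:R / (size X)%:R)%R.

Definition leaf0 : tree := Node Leaf 0 Leaf.

Fixpoint trunk (m : nat) (C : tree) : tree :=
  match m with
  | 0 => leaf0
  | m'.+1 => Node (trunk m' C) 0 C
  end.

Fixpoint kr_shape (k r : nat) : tree :=
  match r with
  | 0 => leaf0
  | r'.+1 => let C := kr_shape k r' in Node C 0 (trunk k.-1 C)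
  end.

Fixpoint label (T : tree) (n : nat) : tree * nat :=
  match T with
  | Leaf => (Leaf, n)
  | Node l _ r =>
      let (l', n1) := label l n in
      let (r', n2) := label r n1.+1 in
      (Node l' n1 r', n2)
  end.

Definition kr_tree (k r : nat) : tree := (label (kr_shape k r) 1).1.

Definition alt (l r : tree) (a b : nat) : bool :=
  ((a \in keys l) && (b \in keys r)) || ((a \in keys r) && (b \in keys l)).

Fixpoint nodes_stable (T : tree) (X : seq nat) : bool :=
  match T with
  | Leaf => true
  | Node l v r =>
      (is_empty l && is_empty r) ||
      [&& sorted (alt l r) [seq x <- X | x \in keys T],
          nodes_stable l X & nodes_stable r X]
  end.

Definition strongly_stable (T : tree) (X : seq nat) : bool :=
  all (fun x => x \in leaf_keys T) X && nodes_stable T X.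

Definition repeat_seq (n : nat) (A : seq nat) : seq nat := flatten (nseq n A).

Definition all_reps_stable (T : tree) (A : seq nat) : Prop :=
  forall n, 0 < n -> strongly_stable T (repeat_seq n A).

Definition is_atomic (T : tree) (A : seq nat) : Prop :=
  [/\ 0 < size A, all_reps_stable T A &
      forall B, 0 < size B -> all_reps_stable T B -> size A <= size B].

Definition whole_multiple_of_atomic (T : tree) (X : seq nat) : Prop :=
  exists A n, [/\ is_atomic T A, 0 < n & X = repeat_seq n A].

Definition alpha (k : nat) : rat := (1 - 1 / 2%:R ^+ k)%R.
Definition beta (k : nat) : rat :=
  (\sum_(1 <= j < k.+1) j%:R / 2%:R ^+ j + k.+1%:R / 2%:R ^+ k)%R.

(* Main.v *)
From HB Require Import structures.
Require Import Defs.
From mathcomp Require Import all_boot all_order all_algebra.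
From mathcomp Require Import zify ring.
Import GRing.Theory Num.Theory.

Definition bst (T : tree) : bool := pairwise ltn (keys T).

Lemma bst_node l v r : bst (Node l v r) ->
  [/\ bst l, bst r, (forall y, y \in keys l -> y < v) & (forall y, y \in keys r -> v < y)].
Proof.
rewrite /bst /= pairwise_cat pairwise_cons => /and3P [H1 H2 /andP [H3 H5]].
move/allrelP: H1 => H1.
split => // y Hy.
- by apply: H1 => //; rewrite mem_head.
- by move/allP: H3 => /(_ y Hy).
Qed.

Fixpoint tree_eqb (a b : tree) : bool :=
  match a, b with
  | Leaf, Leaf => true
  | Node l v r, Node l' v' r' => [&& tree_eqb l l', v == v' & tree_eqb r r']
  | _, _ => false
  end.

Lemma tree_eqP : Equality.axiom tree_eqb.
Proof.
elim=> [|l IHl v r IHr] [|l' v' r'] /=; try by constructor.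
case: (IHl l') => [<-|H]; last by constructor; case.
case: eqP => [<-|H]; last by constructor; case.
case: (IHr r') => [<-|H]; last by constructor; case.
by constructor.
Qed.

HB.instance Definition _ := hasDecEq.Build tree tree_eqP.

Fixpoint nbr (lo : option nat) (vs : seq nat) (hi : option nat)
  : seq (option nat * option nat) :=
  match vs with
  | [::] => [::]
  | v :: vs' => (lo, if vs' is w :: _ then Some w else hi) :: nbr (Some v) vs' hi
  end.

Fixpoint lastor (lo : option nat) (vs : seq nat) : option nat :=
  match vs with [::] => lo | v :: vs' => lastor (Some v) vs' end.

Lemma size_nbr lo vs hi : size (nbr lo vs hi) = size vs.
Proof. by elim: vs lo => //= v vs IH lo; rewrite IH. Qed.

Lemma nbr_rcons lo vs v hi :
  nbr lo (vs ++ [:: v]) hi = nbr lo vs (Some v) ++ [:: (lastor lo vs, hi)].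
Proof.
elim: vs lo => [|a vs IH] lo //=.
by rewrite IH; case: vs {IH}.
Qed.

Lemma lastor_in lo vs : lastor lo vs = lo \/ exists2 w, w \in vs & lastor lo vs = Some w.
Proof.
elim: vs lo => [|a vs IH] lo /=; first by left.
right; case: (IH (Some a)) => [E|[w Hw E]].
  by exists a; [exact: mem_head | exact: E].
by exists w; [rewrite inE Hw orbT | exact: E].
Qed.

Lemma mem_zip1 (S T : eqType) (s : seq S) (t : seq T) w : w \in zip s t -> w.1 \in s.
Proof.
elim: s t => [|a s IH] [|b t] //=; rewrite inE => /orP [/eqP -> | /IH H].
  by rewrite /= eqxx.
by rewrite H orbT.
Qed.

Lemma pieces_keys T d x p : p \in pmap get_node (pieces d T x) -> p.1 \in keys T.
Proof.
elim: T d => [|l IHl v r IHr] d //=.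
case: ifP => _.
  rewrite pmap_cat mem_cat /= inE => /orP [/IHl H | /eqP -> /=].
    by rewrite mem_cat H.
  by rewrite mem_cat mem_head orbT.
case: ifP => _.
  rewrite /= inE => /orP [/eqP -> /= | /IHr H]; first by rewrite mem_cat mem_head orbT.
  by rewrite mem_cat inE H !orbT.
by rewrite /= inE => /eqP -> /=; rewrite mem_cat mem_head orbT.
Qed.

Lemma pieces_depth T d x p : p \in pmap get_node (pieces d T x) -> d <= p.2.
Proof.
elim: T d => [|l IHl v r IHr] d //=.
case: ifP => _.
  rewrite pmap_cat mem_cat /= inE => /orP [/IHl /= H | /eqP -> /=]; lia.
case: ifP => _.
  rewrite /= inE => /orP [/eqP -> /= | /IHr /= H]; lia.
by rewrite /= inE => /eqP ->.
Qed.

Lemma filter_head (P : pred nat) F h t : [seq y <- F | P y] = h :: t -> P h.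
Proof.
move=> E; have : h \in [seq y <- F | P y] by rewrite E mem_head.
by rewrite mem_filter => /andP [].
Qed.

Section Interval.
Variables (x : nat) (F : seq nat) (U : pred nat).

Definition good (w : (nat * nat * tree) * (option nat * option nat)) : Prop :=
  (forall y, U y -> in_open w.2.1 w.2.2 y -> y \in keys w.1.2) /\
  (forall h t, [seq y <- F | y \in keys w.1.2] = h :: t -> in_open w.2.1 w.2.2 h).

Definition wkey (w : nat * nat * tree) : nat := w.1.1.

Lemma interval T d lo0 hi0 :
  bst T -> x \in keys T -> (forall y, y \in keys T -> in_open lo0 hi0 y) ->
  (forall y, U y -> in_open lo0 hi0 y -> y \in keys T) ->
  nodes_stable T (x :: F) ->
  exists W : seq (nat * nat * tree),
  [/\ map fst W = pmap get_node (pieces d T x),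
      (forall w, w \in zip W (nbr lo0 (map wkey W) hi0) -> good w),
      (forall a b, a \in W -> b \in W -> a.1.2 < b.1.2 -> {subset keys b.2 <= keys a.2}) &
      (forall a, a \in W -> {subset keys a.2 <= keys T})].
Proof.
elim: T d lo0 hi0 => [|l IHl v r IHr] d lo0 hi0 //=.
move=> Hb Hx Hin HU Hns.
have [bl br Hl Hr] := @bst_node l v r Hb.
have HinT : forall y, y \in keys l \/ y \in keys r -> y \in keys (Node l v r).
  by move=> y [] H; rewrite /= mem_cat ?inE H ?orbT.
have HvT : v \in keys (Node l v r) by rewrite /= mem_cat mem_head orbT.
case: ifP => Hxv.
  have Hxl : x \in keys l.
    move: Hx; rewrite mem_cat inE => /orP [//|/orP [/eqP E|/Hr H]].
      by rewrite E ltnn in Hxv.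
    by have := ltn_trans H Hxv; rewrite ltnn.
  have Hne : ~~ (is_empty l && is_empty r) by case: (l) Hxl.
  move: Hns; rewrite (negbTE Hne) /= => /and3P [Halt Hnsl Hnsr].
  have Hb1 : forall y, y \in keys l -> in_open lo0 (Some v) y.
    move=> y Hy; have := Hin y (HinT y (or_introl Hy)).
    by rewrite /in_open /= (Hl y Hy) andbT => /andP [].
  have Hb2 : forall y, U y -> in_open lo0 (Some v) y -> y \in keys l.
    move=> y Uy; rewrite /in_open /= => /andP [Ha Hyv].
    have Hy : in_open lo0 hi0 y.
      move: (Hin v HvT); rewrite /in_open Ha /=.
      case: (hi0) => [b|] //= /andP [_ Hvb]; exact: ltn_trans Hyv Hvb.
    move: (HU y Uy Hy); rewrite mem_cat inE => /orP [//|/orP [/eqP E|/Hr H']].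
      by rewrite E ltnn in Hyv.
    by have := ltn_trans Hyv H'; rewrite ltnn.
  have [W1 [Hm1 Hg1 Hn1 Hs1]] := IHl d.+1 lo0 (Some v) bl Hxl Hb1 Hb2 Hnsl.
  set root := (v, d, Node l v r).
  have Hdep1 : forall a, a \in W1 -> d < a.1.2.
    by move=> a Ha; apply: (@pieces_depth l d.+1 x a.1); rewrite -Hm1 map_f.
  have Hk1 : forall a, a \in W1 -> a.1.1 \in keys l.
    by move=> a Ha; apply: (@pieces_keys l d.+1 x a.1); rewrite -Hm1 map_f.
  have Hlast : forall y, in_open (lastor lo0 (map wkey W1)) hi0 y -> y \in keys (Node l v r) -> in_open lo0 hi0 y.
    by move=> y _ /Hin.
  exists (W1 ++ [:: root]); split.
  - by rewrite map_cat Hm1 pmap_cat.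
  - move=> w; rewrite map_cat /= nbr_rcons zip_cat ?size_nbr ?size_map //.
    rewrite mem_cat inE => /orP [/Hg1 //|/eqP -> {w}]; rewrite /good /=.
    split.
      move=> y Uy Hy; apply: HU => //.
      case: (lastor_in lo0 (map wkey W1)) Hy => [-> //|[w /mapP [a Ha ->] ->]].
      rewrite /in_open /= => /andP [H1 H2]; rewrite H2 andbT.
      have := Hin _ (HinT _ (or_introl (Hk1 a Ha))); rewrite /in_open /wkey.
      by case: (lo0) => //= c /andP [H3 _]; exact: ltn_trans H3 H1.
    move=> h t Hf.
    have Hh : h \in keys r.
      move: Halt; rewrite Hx Hf /= /alt Hxl => /andP [/orP [/andP [_ ->] //|/andP [H _]] _].
      by have := Hr _ H; rewrite ltnNge (ltnW Hxv).
    have := Hin _ (HinT _ (or_intror Hh)).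
    case: (lastor_in lo0 (map wkey W1)) => [-> //|[w /mapP [a Ha ->] ->]].
    rewrite /in_open /= => /andP [_ ->]; rewrite andbT.
    have := Hl _ (Hk1 a Ha); have := Hr _ Hh; rewrite /wkey => H3 H4; exact: ltn_trans H4 H3.
  - move=> a b; rewrite !mem_cat !inE.
    move=> /orP [Ha|/eqP ->] /orP [Hbb|/eqP ->] /=.
    + exact: Hn1.
    + by move=> H; have := ltn_trans (Hdep1 _ Ha) H; rewrite ltnn.
    + move=> _ y /(Hs1 _ Hbb) Hy; apply: HinT; by left.
    + by move=> H; rewrite /= ltnn in H.
  - move=> a; rewrite mem_cat inE => /orP [Ha|/eqP -> //].
    by move=> y /(Hs1 _ Ha) Hy; apply: HinT; by left.
case: ifP => Hvx.
  have Hxr : x \in keys r.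
    move: Hx; rewrite mem_cat inE => /orP [/Hl H|/orP [/eqP E|//]].
      by have := ltn_trans H Hvx; rewrite ltnn.
    by rewrite E ltnn in Hvx.
  have Hne : ~~ (is_empty l && is_empty r) by case: (l); case: (r) Hxr.
  move: Hns; rewrite (negbTE Hne) /= => /and3P [Halt Hnsl Hnsr].
  have Hb1 : forall y, y \in keys r -> in_open (Some v) hi0 y.
    move=> y Hy; have := Hin y (HinT y (or_intror Hy)).
    by rewrite /in_open /= (Hr y Hy) => /andP [].
  have Hb2 : forall y, U y -> in_open (Some v) hi0 y -> y \in keys r.
    move=> y Uy; rewrite /in_open /= => /andP [Hyv Ha].
    have Hy : in_open lo0 hi0 y.
      move: (Hin v HvT); rewrite /in_open Ha andbT.
      case: (lo0) => [b|] //= /andP [Hvb _]; exact: ltn_trans Hvb Hyv.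
    move: (HU y Uy Hy); rewrite mem_cat inE => /orP [/Hl H'|/orP [/eqP E|//]].
      by have := ltn_trans H' Hyv; rewrite ltnn.
    by rewrite E ltnn in Hyv.
  have [W2 [Hm2 Hg2 Hn2 Hs2]] := IHr d.+1 (Some v) hi0 br Hxr Hb1 Hb2 Hnsr.
  set root := (v, d, Node l v r).
  have Hdep2 : forall a, a \in W2 -> d < a.1.2.
    by move=> a Ha; apply: (@pieces_depth r d.+1 x a.1); rewrite -Hm2 map_f.
  have Hk2 : forall a, a \in W2 -> a.1.1 \in keys r.
    by move=> a Ha; apply: (@pieces_keys r d.+1 x a.1); rewrite -Hm2 map_f.
  have Hhd : (if map wkey W2 is w :: _ then Some w else hi0) = hi0 \/
             exists2 a, a \in W2 & (if map wkey W2 is w :: _ then Some w else hi0) = Some (wkey a).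
    case: (W2) => [|a W2'] /=; first by left.
    by right; exists a; rewrite ?mem_head.
  exists (root :: W2); split.
  - by rewrite /= Hm2.
  - move=> w; rewrite /= inE => /orP [/eqP -> {w}|/Hg2 //]; rewrite /good /=.
    split.
      move=> y Uy Hy; apply: HU => //.
      case: Hhd Hy => [-> //|[a Ha ->]].
      rewrite /in_open /= => /andP [H1 H2]; rewrite H1 /=.
      have := Hin _ (HinT _ (or_intror (Hk2 a Ha))); rewrite /in_open /wkey.
      by case: (hi0) => //= c /andP [_ H3]; exact: ltn_trans H2 H3.
    move=> h t Hf.
    have Hh : h \in keys l.
      move: Halt; rewrite Hx Hf /= /alt Hxr /= => /andP [/orP [/andP [H _]|->] _] //.
      by have := ltn_trans (Hl _ H) Hvx; rewrite ltnn.
    have := Hin _ (HinT _ (or_introl Hh)).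
    case: Hhd => [-> //|[a Ha ->]].
    rewrite /in_open /= => /andP [-> _] /=.
    have := Hr _ (Hk2 a Ha); have := Hl _ Hh; rewrite /wkey => H3 H4; exact: ltn_trans H3 H4.
  - move=> a b; rewrite !inE.
    move=> /orP [/eqP ->|Ha] /orP [/eqP ->|Hbb] /=.
    + by move=> H; rewrite /= ltnn in H.
    + move=> _ y /(Hs2 _ Hbb) Hy; apply: HinT; by right.
    + by move=> H; have := ltn_trans (Hdep2 _ Ha) H; rewrite ltnn.
    + exact: Hn2.
  - move=> a; rewrite inE => /orP [/eqP -> //|Ha].
    by move=> y /(Hs2 _ Ha) Hy; apply: HinT; right.
have Exv : x = v by apply/eqP; rewrite eqn_leq leqNgt Hvx leqNgt Hxv.
exists [:: (v, d, Node l v r)]; split => //.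
- move=> w; rewrite /= inE => /eqP -> {w}; rewrite /good /=; split.
    by move=> y Uy Hy; apply: HU.
  by move=> h t Hf; apply: Hin; exact: (@filter_head _ _ _ _ Hf).
- by move=> a b; rewrite !inE => /eqP -> /eqP -> /=; rewrite ltnn.
- by move=> a; rewrite inE => /eqP ->.
Qed.
End Interval.

Lemma leaf_keys_sub T y : y \in leaf_keys T -> y \in keys T.
Proof.
elim: T => [|l IHl v r IHr] //=.
case: ifP => _.
  by rewrite inE => /eqP ->; rewrite mem_cat mem_head orbT.
by rewrite !mem_cat inE => /orP [/IHl -> | /IHr ->] //; rewrite !orbT.
Qed.

Lemma ns_tail T x Y : nodes_stable T (x :: Y) -> nodes_stable T Y.
Proof.
elim: T => [|l IHl v r IHr] //=.
case: (is_empty l && is_empty r) => //= /and3P [H1 H2 H3].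
rewrite (IHl H2) (IHr H3) andbT.
by rewrite andbT; move: H1; case: ifP => _ //= H; exact: (path_sorted H).
Qed.

Lemma ns_filter T (P : pred nat) Y : {subset keys T <= P} ->
  nodes_stable T Y -> nodes_stable T [seq y <- Y | P y].
Proof.
elim: T => [|l IHl v r IHr] //= Hs.
case: (is_empty l && is_empty r) => //= /and3P [H1 H2 H3].
rewrite IHl ?IHr //; last 2 first.
- by move=> y Hy; apply: Hs; rewrite mem_cat inE Hy !orbT.
- by move=> y Hy; apply: Hs; rewrite mem_cat Hy.
rewrite andbT -filter_predI.
rewrite andbT; apply: etrans H1; congr sorted.
apply: eq_filter => y /=; case E: (y \in _) => //=; exact: Hs.
Qed.



Lemma pieces_size T d x :
  size (pmap get_tree (pieces d T x)) = (size (pmap get_node (pieces d T x))).+1.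
Proof.
elim: T d => [|l IHl v r IHr] d //=.
case: ifP => _.
  rewrite !pmap_cat !size_cat IHl /=; lia.
by case: ifP => _ //=; rewrite IHr.
Qed.

Lemma amin_cons x s : s != [::] ->
  amin (x :: s) = (let j := amin s in if prec (nth x s j) x then j.+1 else 0).
Proof. by case: s. Qed.

Lemma amin_lt s : s != [::] -> amin s < size s.
Proof.
elim: s => [|x s IH] //= _.
case: s IH => [|y s] // IH.
rewrite -/(amin (y :: s)); move: (IH isT).
case: ifP => _ //= H; lia.
Qed.

Lemma amin_last s n : (forall y, y \in s -> prec n y) -> amin (s ++ [:: n]) = size s.
Proof.
elim: s => [|a s IH] H; first by [].
rewrite (@amin_cons a (s ++ [:: n])); last by case: s {IH H}.
rewrite IH; last by move=> y Hy; apply: H; rewrite inE Hy orbT.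
by rewrite /= nth_cat ltnn subnn /= H // mem_head.
Qed.

Lemma amin_first n s : (forall y, y \in s -> ~~ prec y n) -> amin (n :: s) = 0.
Proof.
case: s => [|a s] // H.
rewrite amin_cons //= (negbTE (H _ _)) //.
apply: mem_nth; exact: (@amin_lt (a :: s)).
Qed.

Lemma build_S f ns ss d0 : ns != [::] ->
  build f.+1 ns ss =
  Node (build f (take (amin ns) ns) (take (amin ns).+1 ss)) (nkey (nth d0 ns (amin ns)))
       (build f (drop (amin ns).+1 ns) (drop (amin ns).+1 ss)).
Proof.
case: ns => [|n0 ns] // _ /=.
by rewrite (set_nth_default n0 d0) //; exact: (@amin_lt (n0 :: ns)).
Qed.

Lemma build_nil f s : build f [::] [:: s] = s.
Proof. by case: f. Qed.

Lemma prec_lt a b : ndepth a < ndepth b -> ntau a <= ntau b -> prec a b.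
Proof. rewrite /prec => H1 H2; rewrite H1 andbT; lia. Qed.

Lemma nprec_lt a b : ndepth a < ndepth b -> ntau a <= ntau b -> ~~ prec b a.
Proof. rewrite /prec => H1 H2; apply/negP => /orP [H|/andP [/eqP H H']]; lia. Qed.

Lemma build_pieces T d x (ns : seq (nat * nat * nat)) f :
  map fst ns = pmap get_node (pieces d T x) ->
  (forall a b, a \in ns -> b \in ns -> ndepth a < ndepth b -> ntau a <= ntau b) ->
  size ns <= f -> build f ns (pmap get_tree (pieces d T x)) = T.
Proof.
elim: T d ns f => [|l IHl v r IHr] d ns f /=.
  by case: ns => // _ _ _; rewrite build_nil.
case: ifP => Hxv.
  rewrite pmap_cat /= => Hm Hmon Hf.
  case/lastP: ns Hm Hmon Hf => [|ns1 n]; first by case: (pmap _ _).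
  rewrite map_rcons cats1 => /rcons_inj [Hm1 Hn] Hmon Hf.
  case: f Hf => [|f] Hf; first by rewrite size_rcons in Hf.
  have Hdep : forall y, y \in ns1 -> ndepth n < ndepth y.
    move=> y Hy; rewrite /ndepth Hn /=.
    have : y.1 \in pmap get_node (pieces d.+1 l x) by rewrite -Hm1 map_f.
    by move/pieces_depth.
  have Hmon' : forall a b, a \in ns1 -> b \in ns1 -> ndepth a < ndepth b -> ntau a <= ntau b.
    by move=> a b Ha Hb; apply: Hmon; rewrite mem_rcons inE ?Ha ?Hb orbT.
  have Hpr : forall y, y \in ns1 -> prec n y.
    move=> y Hy; apply: prec_lt; first exact: Hdep.
    by apply: Hmon; rewrite ?mem_rcons ?inE ?eqxx ?Hy ?orbT //; exact: Hdep.
  rewrite (build_S _ _ _ n); last by case: ns1 {Hm1 Hmon Hf Hmon' Hdep Hpr}.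
  rewrite -cats1 amin_last //.
  have Hsz : size (pmap get_tree (pieces d.+1 l x)) = (size ns1).+1.
    by rewrite pieces_size -Hm1 size_map.
  rewrite pmap_cat /= take_size_cat // take_size_cat // (drop_size_cat _ Hsz) drop_oversize; last by rewrite size_cat /= addn1.
  rewrite nth_cat ltnn subnn /=.
  rewrite build_nil IHl //; last by rewrite size_rcons in Hf.
  by rewrite /nkey Hn.
case: ifP => Hvx.
  rewrite /= => Hm Hmon Hf.
  case: ns Hm Hmon Hf => [|n ns2] //= [Hn Hm2] Hmon Hf.
  case: f Hf => [|f] // Hf.
  have Hdep : forall y, y \in ns2 -> ndepth n < ndepth y.
    move=> y Hy; rewrite /ndepth Hn /=.
    have : y.1 \in pmap get_node (pieces d.+1 r x) by rewrite -Hm2 map_f.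
    by move/pieces_depth.
  rewrite (build_S _ _ _ n) // amin_first; last first.
    move=> y Hy; apply: nprec_lt; first exact: Hdep.
    by apply: Hmon; rewrite ?inE ?eqxx ?Hy ?orbT //; exact: Hdep.
  rewrite /= take0 !drop0 build_nil IHr //; first by rewrite /nkey Hn.
  by move=> a b Ha Hb; apply: Hmon; rewrite inE ?Ha ?Hb orbT.
rewrite /= => Hm Hmon Hf.
case: ns Hm Hmon Hf => [|n [|? ?]] //= [Hn] Hmon Hf.
case: f Hf => [|f] // Hf.
by rewrite (build_S _ _ _ n) //= !build_nil /nkey Hn.
Qed.

Lemma find_mono (P Q : pred nat) s : (forall y, y \in s -> Q y -> P y) -> find P s <= find Q s.
Proof.
elim: s => [|y s IH] //= H.
case Qy: (Q y); first by rewrite (H y (mem_head _ _) Qy).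
case: (P y) => //; rewrite ltnS; apply: IH => z Hz; by apply: H; rewrite inE Hz orbT.
Qed.

Lemma find_first (P Q : pred nat) s :
  (forall h t, [seq y <- s | P y] = h :: t -> Q h) -> find Q s <= find P s.
Proof.
elim: s => [|y s IH] //= H.
case Py: (P y).
  by have -> : Q y by apply: (H y [seq y <- s | P y]); rewrite /= Py.
case: (Q y) => //; rewrite ltnS; apply: IH => h t E; by apply: (H h t); rewrite /= Py E.
Qed.

Lemma zip_nbr (A : Type) (nds : seq A) lo vs hi : size nds = size vs ->
  zip nds (zip (lo :: map Some vs) (map Some (behead vs) ++ [:: hi])) = zip nds (nbr lo vs hi).
Proof.
elim: vs nds lo => [|v vs IH] [|n nds] lo //= [Hs].
case: vs IH Hs => [|w vs] IH Hs; first by case: nds Hs.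
by rewrite -IH.
Qed.

Lemma map_zip_fst (A B C D : Type) (W : seq (A * B)) (L : seq C) (g : C -> D) :
  [seq (let '(nd, lohi) := p in (nd, g lohi)) | p <- zip (map fst W) L]
  = [seq (w.1.1, g w.2) | w <- zip W L].
Proof. by elim: W L => [|w W IH] [|c L] //=; rewrite IH. Qed.

Lemma map_zip_fst2 (A B C : Type) (W : seq (A * B)) (L : seq C) :
  size L = size W -> [seq w.1.1 | w <- zip W L] = map fst W.
Proof. by elim: W L => [|w W IH] [|c L] //= [Hs]; rewrite IH. Qed.

Lemma gf_static T x F : bst T -> x \in keys T -> all (fun y => y \in keys T) F ->
  nodes_stable T (x :: F) -> gf_step F T x = T.
Proof.
move=> Hb Hx HF Hns.
have [W [Hm Hg Hn Hs]] := @interval x F (fun y => y \in keys T) T 0 None None Hb Hx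
   (fun _ _ => isT) (fun y Uy _ => Uy) Hns.
rewrite /gf_step -Hm map_comp.
have -> : [seq i.1 | i <- [seq i.1 | i <- W]] = map wkey W by rewrite -map_comp.
rewrite map_id zip_nbr; last by rewrite !size_map.
rewrite map_zip_fst.
set nb := nbr None (map wkey W) None.
have Hsz : size nb = size W by rewrite size_nbr size_map.
apply: build_pieces => //.
- by rewrite -map_comp /comp /= map_zip_fst2.
- move=> a b /mapP [wa Ha ->] /mapP [wb Hbb ->]; rewrite /ndepth /ntau /= => Hd.
  have Hsub := Hn _ _ (@mem_zip1 _ _ _ _ _ Ha) (@mem_zip1 _ _ _ _ _ Hbb) Hd.
  have [_ Ga] := Hg _ Ha; have [Gb _] := Hg _ Hbb.
  apply: leq_trans (@find_first (fun y => y \in keys wa.1.2) _ _ Ga) _.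
  apply: leq_trans (@find_mono (fun y => y \in keys wa.1.2) (fun y => y \in keys wb.1.2) F _) _.
    by move=> y _ /Hsub.
  apply: find_mono => y Hy; apply: Gb; exact: (allP HF).
Qed.

Definition cost (T : tree) (s : seq nat) : nat := sumn (map (path_len T) s).

Lemma gf_total_static T X : bst T -> all (fun y => y \in keys T) X ->
  nodes_stable T X -> gf_total T X = cost T X.
Proof.
move=> Hb; elim: X => [|x X IH] //= /andP [Hx HX] Hns.
by rewrite gf_static // IH //; exact: ns_tail Hns.
Qed.

Lemma alt_count l r t a : (forall y, y \in keys l -> y \notin keys r) ->
  sorted (alt l r) (a :: t) ->
  (a \in keys l -> count (fun y => y \in keys r) (a :: t) <= count (fun y => y \in keys l) (a :: t)
                   <= (count (fun y => y \in keys r) (a :: t)).+1) /\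
  (a \in keys r -> count (fun y => y \in keys l) (a :: t) <= count (fun y => y \in keys r) (a :: t)
                   <= (count (fun y => y \in keys l) (a :: t)).+1).
Proof.
move=> Hd; elim: t a => [|b t IH] a /=.
  move=> _; split=> H.
    by rewrite H (negbTE (Hd _ H)).
  have -> : (a \in keys l) = false by apply/negP => /Hd; rewrite H.
  by rewrite H.
move=> /andP [Hab Hp].
have [IH1 IH2] := IH b Hp.
split=> Ha.
  have Har : (a \in keys r) = false by apply/negbTE/Hd.
  have Hbr : b \in keys r by move: Hab; rewrite /alt Ha Har /= orbF.
  move: (IH2 Hbr) => /=; rewrite Ha Har /=.
  case: (b \in keys r); case: (b \in keys l) => /=; lia.
have Hal : (a \in keys l) = false by apply/negP => /Hd; rewrite Ha.
have Hbl : b \in keys l by move: Hab; rewrite /alt Ha Hal /=.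
move: (IH1 Hbl) => /=; rewrite Ha Hal /=.
case: (b \in keys r); case: (b \in keys l) => /=; lia.
Qed.

Lemma count_split (P Q : pred nat) s : (forall y, y \in s -> P y || Q y) ->
  (forall y, P y -> ~~ Q y) -> count P s + count Q s = size s.
Proof.
move=> H1 H2; elim: s H1 => [|y s IH] //= H1.
rewrite -IH; last by move=> z Hz; apply: H1; rewrite inE Hz orbT.
have := H1 y (mem_head _ _); case Py: (P y) => /= Hq.
  by rewrite (negbTE (H2 _ Py)); lia.
rewrite Hq; lia.
Qed.

Lemma cost_node l v r s : bst (Node l v r) ->
  all (fun y => (y \in keys l) || (y \in keys r)) s ->
  cost (Node l v r) s = size s + cost l [seq y <- s | y \in keys l]
                                 + cost r [seq y <- s | y \in keys r].
Proof.
move=> Hb; have [_ _ Hl Hr] := @bst_node l v r Hb.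
elim: s => [|y s IH] //= /andP [Hy Hs].
rewrite /cost /= in IH *; rewrite IH //.
case/orP: Hy => Hy.
  have Hyr : (y \in keys r) = false.
    by apply/negP => /Hr H; have := ltn_trans H (Hl _ Hy); rewrite ltnn.
  rewrite Hy Hyr (Hl _ Hy) /=; lia.
have Hyl : (y \in keys l) = false.
  by apply/negP => /Hl H; have := ltn_trans H (Hr _ Hy); rewrite ltnn.
have Hyv : (y < v) = false by apply/negP => H; have := ltn_trans H (Hr _ Hy); rewrite ltnn.
rewrite Hy Hyl Hyv (Hr _ Hy) /=; lia.
Qed.

Lemma counts_eq l v r s : bst (Node l v r) ->
  all (fun y => (y \in keys l) || (y \in keys r)) s ->
  sorted (alt l r) (s ++ s) ->
  count (fun y => y \in keys l) s = count (fun y => y \in keys r) s.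
Proof.
move=> Hb Hs Halt; have [_ _ Hl Hr] := @bst_node l v r Hb.
have Hd : forall y, y \in keys l -> y \notin keys r.
  by move=> y Hy; apply/negP => /Hr H; have := ltn_trans H (Hl _ Hy); rewrite ltnn.
case: s Hs Halt => [|a s] // Hs Halt.
have [H1 H2] := @alt_count l r (s ++ a :: s) a Hd Halt.
have Ha : (a \in keys l) || (a \in keys r) by move: Hs => /= /andP [].
move: H1 H2; rewrite -cat_cons !count_cat.
have fin : forall cl cr, cr + cr <= cl + cl -> cl + cl <= (cr + cr).+1 -> cl = cr.
  move=> cl cr H H'; lia.
case/orP: Ha => Ha.
  by move=> /(_ Ha) /andP [H H'] _; apply: fin.
by move=> _ /(_ Ha) /andP [H H']; apply/esym/fin.
Qed.

Fixpoint Ecost (T : tree) : rat :=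
  match T with
  | Leaf => 0%R
  | Node l _ r => if is_empty l && is_empty r then 1%R
                  else (1 + (Ecost l + Ecost r) / 2%:R)%R
  end.

Lemma cost_E T s : bst T -> all (fun y => y \in leaf_keys T) s ->
  nodes_stable T (s ++ s) -> ((cost T s)%:R = (size s)%:R * Ecost T :> rat)%R.
Proof.
elim: T s => [|l IHl v r IHr] s Hb Hs Hns; first by move: Hs Hns; case: s.
have [bl br Hl Hr] := @bst_node l v r Hb.
have Hd : forall y, y \in keys l -> y \notin keys r.
  by move=> y Hy; apply/negP => /Hr H; have := ltn_trans H (Hl _ Hy); rewrite ltnn.
case E0 : (is_empty l && is_empty r).
  clear IHl IHr bl br Hl Hr Hd Hb Hns; case: l r E0 Hs => [|? ? ?] [|? ? ?] // _ Hs.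
  have -> : cost (Node Leaf v Leaf) s = size s.
    elim: s Hs => [|y s IH] //= /andP [Hy Hs].
    move: Hy; rewrite inE => /eqP ->; rewrite /cost /= ltnn.
    by rewrite /cost in IH; rewrite IH.
  by rewrite /= mulr1.
move: Hs Hns; rewrite /= E0 => Hs /and3P [Halt Hnsl Hnsr].
have Hs' : all (fun y => (y \in keys l) || (y \in keys r)) s.
  apply/allP => y Hy; move/allP: Hs => /(_ y Hy); rewrite mem_cat.
  by case/orP => /leaf_keys_sub ->; rewrite ?orbT.
have HsT : all (fun y => y \in keys l ++ v :: keys r) (s ++ s).
  rewrite all_cat andbb; apply/allP => y Hy; move/allP: Hs' => /(_ y Hy).
  by rewrite mem_cat inE => /orP [->|->]; rewrite ?orbT.
move/all_filterP: HsT => HsT; rewrite HsT in Halt.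
have Hc := @counts_eq l v r s Hb Hs' Halt.
have Hsz := @count_split (fun y => y \in keys l) (fun y => y \in keys r) s
   (fun y Hy => (allP Hs') y Hy) Hd.
rewrite (@cost_node l v r s Hb Hs').
have Hl' : all (fun y => y \in leaf_keys l) [seq y <- s | y \in keys l].
  apply/allP => y; rewrite mem_filter => /andP [Hyl Hy].
  move/allP: Hs => /(_ y Hy); rewrite mem_cat => /orP [//|/leaf_keys_sub H].
  by move: (Hd _ Hyl); rewrite H.
have Hr' : all (fun y => y \in leaf_keys r) [seq y <- s | y \in keys r].
  apply/allP => y; rewrite mem_filter => /andP [Hyr Hy].
  move/allP: Hs => /(_ y Hy); rewrite mem_cat => /orP [/leaf_keys_sub H|//].
  by move: (Hd _ H); rewrite Hyr.
rewrite !natrD (IHl _ bl Hl') ?(IHr _ br Hr'); last 2 first.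
- by rewrite -filter_cat; apply: ns_filter.
- by rewrite -filter_cat; apply: ns_filter.
rewrite !size_filter -Hc -Hsz -Hc natrD.
by field.
Qed.

Lemma label_spec T n :
  [/\ (label T n).2 = n + size (keys T), keys (label T n).1 = iota n (size (keys T)),
      is_empty (label T n).1 = is_empty T & Ecost (label T n).1 = Ecost T].
Proof.
elim: T n => [|l IHl v r IHr] n; first by rewrite /= addn0.
rewrite /=.
case E1: (label l n) => [l' n1]; case E2: (label r n1.+1) => [r' n2] /=.
have [H1 H2 H3 H4] := IHl n; rewrite E1 /= in H1 H2 H3 H4.
have [H5 H6 H7 H8] := IHr n1.+1; rewrite E2 /= in H5 H6 H7 H8.
rewrite H3 H7 H4 H8 H2 H6 H5 H1 size_cat /=; split => //.
  by rewrite addSn !addnS addnA.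
by rewrite iotaD.
Qed.

Lemma bst_kr k r : bst (kr_tree k r).
Proof.
have [_ H _ _] := label_spec (kr_shape k r) 1.
by rewrite /bst /kr_tree H -sorted_pairwise ?iota_ltn_sorted //; exact: ltn_trans.
Qed.

Lemma Ecost_kr k r : Ecost (kr_tree k r) = Ecost (kr_shape k r).
Proof. by have [_ _ _ H] := label_spec (kr_shape k r) 1. Qed.

Local Open Scope ring_scope.

Lemma Ecost_trunk m C :
  Ecost (trunk m C) = 2%:R + Ecost C - (1 + Ecost C) / 2%:R ^+ m.
Proof.
elim: m => [|m IH] /=; first by rewrite expr0 divr1; field.
have -> : is_empty (trunk m C) = false by case: m {IH}.
rewrite /= IH exprS.
have H : (2%:R ^+ m : rat) != 0 by rewrite expf_neq0.
by field.
Qed.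

Lemma sum_j k : \sum_(1 <= j < k.+1) (j%:R / 2%:R ^+ j : rat) = 2%:R - (k + 2)%:R / 2%:R ^+ k.
Proof.
elim: k => [|k IH]; first by rewrite big_geq // expr0 divr1 addn2 subrr.
rewrite big_nat_recr //= IH exprS.
have H : (2%:R ^+ k : rat) != 0 by rewrite expf_neq0.
rewrite !natrD.
by field.
Qed.

Lemma beta_eq k : beta k = 2%:R - 1 / 2%:R ^+ k.
Proof.
rewrite /beta sum_j.
have H : (2%:R ^+ k : rat) != 0 by rewrite expf_neq0.
rewrite !natrD -addn1 natrD.
by field.
Qed.

Lemma Ecost_shape_formula k r : (1 <= k)%N ->
  Ecost (kr_shape k r) = 2%:R ^+ k * beta k * (1 - alpha k ^+ r) + alpha k ^+ r.
Proof.
case: k => [|k] // _.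
elim: r => [|r IH]; first by rewrite /= expr0 subrr mulr0 add0r.
have -> : kr_shape k.+1 r.+1 = Node (kr_shape k.+1 r) 0 (trunk k (kr_shape k.+1 r)) by [].
rewrite /=.
have -> : is_empty (kr_shape k.+1 r) = false by case: r {IH}.
rewrite /= Ecost_trunk IH beta_eq /alpha.
rewrite [_ ^+ r.+1]exprS.
set a := (_ - _) ^+ r.
rewrite !exprS.
have H : (2%:R ^+ k : rat) != 0 by rewrite expf_neq0.
set q := (2%:R ^+ k : rat) in H *.
by field.
Qed.

Local Close Scope ring_scope.

Theorem lemma9 (k r : nat) (X : seq nat) :
  2 <= k ->
  strongly_stable (kr_tree k r) X ->
  whole_multiple_of_atomic (kr_tree k r) X ->
  gf_avg_cost (kr_tree k r) X =
  (2%:R ^+ k * beta k * (1 - alpha k ^+ r) + alpha k ^+ r)%R.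
Proof.
move=> Hk /andP [Hall Hns] [A [n [[HA Hreps _] Hn EX]]].
have Hb := bst_kr k r.
have HallK : all (fun y => y \in keys (kr_tree k r)) X.
  by apply/allP => y /(allP Hall) /leaf_keys_sub.
rewrite /gf_avg_cost (@gf_total_static _ X Hb HallK Hns).
have HXX : nodes_stable (kr_tree k r) (X ++ X).
  have : 0 < n + n by rewrite addn_gt0 Hn.
  move/Hreps; rewrite /strongly_stable => /andP [_].
  by rewrite /repeat_seq nseqD flatten_cat -/(repeat_seq n A) EX.
rewrite (@cost_E _ X Hb Hall HXX).
have Hsz : 0 < size X.
  rewrite EX; case: n Hn {EX} => [|n] // _.
  by rewrite /repeat_seq /= size_cat; apply: leq_trans HA (leq_addr _ _).
rewrite Ecost_kr Ecost_shape_formula; last by apply: leq_trans Hk.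
rewrite [Y in (Y / _)%R]mulrC mulfK //.
by rewrite pnatr_eq0 -lt0n.
Qed.
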